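(* There is an absolute constant $\alpha>0$ such that the following holds. Let $n\ge 2$, $c\ge 1$, $0<\Delta\le c^2$, and let $W=(\vec v_i)_{i\in I}$ be a family of $|I|\le n$ vectors in $\mathbb{R}^D$ such that every vertex has expected degree at most $c$ in $G\sim\mathcal{G}_W$. Suppose there is $L>0$ with $L\ge \sqrt{\Delta}/(4c)$ such that $\|\vec v_i\|_2<2L$ for all $i\in I$ and at least $(\Delta/60c^2)(n/\lg n)$ indices $i\in I$ satisfy $\|\vec v_i\|_2\ge L$. Then the matrix whose columns are the $\vec v_i$ has rank at least $\alpha\,(\Delta^4/c^9)\, n/\lg^2 n$.
   Context: For a finite family of vectors $W=(\vec w_i)_{i\in I}$ in $\mathbb{R}^D$, $\mathcal{G}_W$ is the distribution on simple undirected graphs with vertex set $I$ in which, independently for each unordered pair $\{i,j\}$ with $i\neq j$, the edge $(i,j)$ is present with probability $\max(0,\min(\vec w_i\cdot\vec w_j,1))$. The expected degree of $i$ is $\sum_{j\ne i}\max(0,\min(\vec w_i\cdot\vec w_j,1))$. $\lg$ is the base-2 logarithm. *)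

(* Defs.v *)
From Stdlib Require Import Reals Lra List.
Import ListNotations.
Open Scope R_scope.

Definition rsum (l : list nat) (f : nat -> R) : R :=
  fold_right (fun i acc => f i + acc) 0 l.

(* A family of |I| = m vectors in R^D is encoded as v : nat -> nat -> R,
   where v i k is the k-th coordinate (k < D) of the i-th vector (i < m). *)
Definition dot (D : nat) (x y : nat -> R) : R :=
  rsum (seq 0 D) (fun k => x k * y k).

Definition norm2 (D : nat) (x : nat -> R) : R := sqrt (dot D x x).

Definition edge_prob (D : nat) (x y : nat -> R) : R :=
  Rmax 0 (Rmin (dot D x y) 1).

Definition expected_degree (D m : nat) (v : nat -> nat -> R) (i : nat) : R :=
  rsum (filter (fun j => negb (Nat.eqb j i)) (seq 0 m))
       (fun j => edge_prob D (v i) (v j)).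

Definition count_long (D m : nat) (v : nat -> nat -> R) (L : R) : nat :=
  length (filter (fun i => if Rle_dec L (norm2 D (v i)) then true else false)
                 (seq 0 m)).

Definition lg (x : R) : R := ln x / ln 2.

Definition lin_indep (D : nat) (v : nat -> nat -> R) (S : list nat) : Prop :=
  NoDup S /\
  forall a : nat -> R,
    (forall k, (k < D)%nat -> rsum S (fun i => a i * v i k) = 0) ->
    forall i, In i S -> a i = 0.

(* rank of the D x m matrix with columns v 0, ..., v (m-1):
   the maximal number of linearly independent columns.
   "rank >= r" is expressed as existence of r independent columns. *)
Definition rank_ge (D m : nat) (v : nat -> nat -> R) (r : R) : Prop :=
  exists S : list nat,
    incl S (seq 0 m) /\ lin_indep D v S /\ r <= INR (length S).

(* Main.v *)
Require Import Defs.
From Stdlib Require Import Reals Lra Lia List Arith ZArith.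
Import ListNotations.
Open Scope R_scope.

Lemma rsum_nil f : rsum [] f = 0. Proof. reflexivity. Qed.
Lemma rsum_cons x l f : rsum (x :: l) f = f x + rsum l f. Proof. reflexivity. Qed.
Lemma rsum_app l1 l2 f : rsum (l1 ++ l2) f = rsum l1 f + rsum l2 f.
Proof. induction l1; simpl; [lra|rewrite IHl1; lra]. Qed.
Lemma rsum_ext_in l f g : (forall x, In x l -> f x = g x) -> rsum l f = rsum l g.
Proof. induction l; simpl; intros H; auto. rewrite H by auto; rewrite IHl; auto. Qed.
Lemma rsum_ext l f g : (forall x, f x = g x) -> rsum l f = rsum l g.
Proof. intros; apply rsum_ext_in; auto. Qed.
Lemma rsum_le l f g : (forall x, In x l -> f x <= g x) -> rsum l f <= rsum l g.
Proof. induction l; simpl; intros H; [lra|]. pose proof (H a (or_introl eq_refl)).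
 assert (rsum l f <= rsum l g) by (apply IHl; auto). lra. Qed.
Lemma rsum_nonneg l f : (forall x, In x l -> 0 <= f x) -> 0 <= rsum l f.
Proof. intros; replace 0 with (rsum l (fun _ => 0)). apply rsum_le; auto.
 induction l; simpl; auto. rewrite IHl; [lra|intros; apply H; simpl; auto]. Qed.
Lemma rsum_plus l f g : rsum l (fun x => f x + g x) = rsum l f + rsum l g.
Proof. induction l; simpl; lra. Qed.
Lemma rsum_minus l f g : rsum l (fun x => f x - g x) = rsum l f - rsum l g.
Proof. induction l; simpl; lra. Qed.
Lemma rsum_scal l a f : rsum l (fun x => a * f x) = a * rsum l f.
Proof. induction l; simpl; lra. Qed.
Lemma rsum_const l C : rsum l (fun _ => C) = INR (length l) * C.
Proof. induction l; simpl length; rewrite ?S_INR; simpl; lra. Qed.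
Lemma rsum_swap l1 l2 (F : nat -> nat -> R) :
  rsum l1 (fun i => rsum l2 (fun j => F i j)) = rsum l2 (fun j => rsum l1 (fun i => F i j)).
Proof. induction l1; simpl. induction l2; simpl; lra.
 rewrite IHl1. rewrite <- rsum_plus. reflexivity. Qed.
Lemma rsum_abs l f : Rabs (rsum l f) <= rsum l (fun x => Rabs (f x)).
Proof. induction l; simpl. rewrite Rabs_R0; lra.
 eapply Rle_trans. apply Rabs_triang. lra. Qed.
Lemma rsum_filter (p : nat -> bool) l f :
  rsum (filter p l) f = rsum l (fun j => if p j then f j else 0).
Proof. induction l; simpl; auto. destruct (p a); simpl; lra. Qed.
Lemma length_filter_R (p : nat -> bool) l :
  INR (length (filter p l)) = rsum l (fun j => if p j then 1 else 0).
Proof. induction l; simpl; auto. destruct (p a); simpl length; rewrite ?S_INR; lra. Qed.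
Lemma rsum_split_at l i F : NoDup l -> In i l ->
  rsum l F = F i + rsum l (fun j => if Nat.eqb j i then 0 else F j).
Proof. induction l; simpl; intros Hn Hi; [tauto|]. inversion Hn; subst.
 destruct Hi as [<-|Hi].
 - rewrite Nat.eqb_refl. f_equal. rewrite Rplus_0_l. apply rsum_ext_in.
   intros x Hx. destruct (Nat.eqb_spec x a); subst; tauto.
 - destruct (Nat.eqb_spec a i); [subst; tauto|]. rewrite (IHl H2 Hi). lra. Qed.
Lemma rsum_zero l f : (forall x, In x l -> f x = 0) -> rsum l f = 0.
Proof. induction l; simpl; intros H; auto. rewrite H, IHl; auto; lra. Qed.
Lemma rsum_delta q a y : (a < q)%nat ->
  rsum (seq 0 q) (fun k => if Nat.eqb a k then y else 0) = y.
Proof. induction q; intros H; [lia|]. rewrite seq_S, rsum_app. simpl.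
 destruct (Nat.eqb_spec a q).
 - subst. replace (rsum (seq 0 q) _) with 0. lra.
   symmetry. apply rsum_zero.
   intros x Hx; apply in_seq in Hx. destruct (Nat.eqb_spec q x); [lia|auto].
 - rewrite IHq by lia; lra. Qed.
Fixpoint upairs (w : nat -> nat -> R) (T : list nat) : R :=
  match T with [] => 0 | x :: T' => rsum T' (w x) + upairs w T' end.
Fixpoint phi (w : nat -> nat -> R) (f : nat -> nat) (T : list nat) : R :=
  match T with [] => 0
  | x :: T' => rsum T' (fun j => if Nat.eqb (f j) (f x) then w x j else 0) + phi w f T' end.

Lemma phi_ext_in w f g T : (forall j, In j T -> f j = g j) -> phi w f T = phi w g T.
Proof. induction T; simpl; intros H; auto. rewrite IHT by auto. f_equal.
 apply rsum_ext_in. intros j Hj. rewrite (H j), (H a); auto. Qed.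

Lemma rsum_lt l f g : l <> [] -> (forall x, In x l -> f x < g x) -> rsum l f < rsum l g.
Proof. destruct l as [|a l]; [tauto|]. intros _ H. simpl.
 assert (rsum l f <= rsum l g) by (apply rsum_le; intros; apply Rlt_le, H; simpl; auto).
 pose proof (H a (or_introl eq_refl)). lra. Qed.

Lemma avg_le q g : (1 <= q)%nat -> exists k, (k < q)%nat /\ INR q * g k <= rsum (seq 0 q) g.
Proof. intros Hq. destruct (Classical_Prop.classic (exists k, (k < q)%nat /\ INR q * g k <= rsum (seq 0 q) g)) as [H|H]; auto.
 exfalso. assert (Hlt: forall k, In k (seq 0 q) -> rsum (seq 0 q) g < INR q * g k).
 { intros k Hk; apply in_seq in Hk. apply Rnot_le_lt. intro. apply H. exists k; split; [lia|auto]. }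
 assert (rsum (seq 0 q) (fun _ => rsum (seq 0 q) g) < rsum (seq 0 q) (fun k => INR q * g k)).
 { apply rsum_lt. destruct q; [lia|simpl; congruence]. auto. }
 rewrite rsum_const, rsum_scal, length_seq in H0. lra. Qed.

Lemma avg_ge q g : (1 <= q)%nat -> exists k, (k < q)%nat /\ rsum (seq 0 q) g <= INR q * g k.
Proof. intros Hq. destruct (avg_le q (fun k => - g k) Hq) as [k [Hk H]]. exists k; split; auto.
 replace (rsum (seq 0 q) (fun k => - g k)) with (- rsum (seq 0 q) g) in H. lra.
 rewrite <- (Rmult_1_l (rsum _ g)), Ropp_mult_distr_l, <- rsum_scal. apply rsum_ext; intros; lra. Qed.

Lemma sum_classes q (f : nat -> nat) T (F : nat -> R) : (forall i, (f i < q)%nat) ->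
  rsum (seq 0 q) (fun k => rsum T (fun j => if Nat.eqb (f j) k then F j else 0)) = rsum T F.
Proof. intros Hf. rewrite rsum_swap. apply rsum_ext. intros j. apply rsum_delta; auto. Qed.

Lemma coloring w q T : NoDup T -> (1 <= q)%nat ->
  exists f, (forall i, (f i < q)%nat) /\ INR q * phi w f T <= upairs w T.
Proof. intros HT Hq. induction T as [|x T' IH].
 - exists (fun _ => 0%nat). split; [intros; lia|simpl; lra].
 - inversion HT; subst. destruct (IH H2) as [f [Hf Hphi]].
   set (g := fun k => rsum T' (fun j => if Nat.eqb (f j) k then w x j else 0)).
   destruct (avg_le q g Hq) as [k [Hk Hg]].
   assert (Hs: rsum (seq 0 q) g = rsum T' (w x)) by (apply sum_classes; auto).
   exists (fun j => if Nat.eqb j x then k else f j). split.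
   + intros i; destruct (Nat.eqb i x); auto.
   + simpl. rewrite Nat.eqb_refl.
     rewrite (phi_ext_in w _ f) by (intros j Hj; destruct (Nat.eqb_spec j x); subst; tauto).
     assert (E: rsum T' (fun j => if Nat.eqb (if Nat.eqb j x then k else f j) k then w x j else 0) = g k).
     { apply rsum_ext_in. intros j Hj; destruct (Nat.eqb_spec j x); subst; tauto. }
     rewrite E. rewrite Rmult_plus_distr_l. lra. Qed.

Definition cls (f : nat -> nat) k T := filter (fun j => Nat.eqb (f j) k) T.

Lemma phi_classes w q f T : (forall i, (f i < q)%nat) ->
  rsum (seq 0 q) (fun k => phi w f (cls f k T)) = phi w f T.
Proof. intros Hf. induction T as [|x T' IH]; simpl.
 - apply rsum_zero; auto.
 - rewrite <- IH. rewrite <- (rsum_delta q (f x) (rsum T' (fun j => if Nat.eqb (f j) (f x) then w x j else 0))) by auto.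
   rewrite <- rsum_plus. apply rsum_ext. intros k. unfold cls; simpl.
   destruct (Nat.eqb_spec (f x) k); simpl.
   + subst. f_equal. rewrite rsum_filter. apply rsum_ext; intros j. destruct (Nat.eqb (f j) (f x)); auto.
   + lra. Qed.

Lemma len_classes q f T : (forall i, (f i < q)%nat) ->
  rsum (seq 0 q) (fun k => INR (length (cls f k T))) = INR (length T).
Proof. intros Hf. unfold cls. rewrite (rsum_ext _ _ (fun k => rsum T (fun j => if Nat.eqb (f j) k then 1 else 0))).
 rewrite sum_classes by auto. rewrite rsum_const; lra.
 intros; apply length_filter_R. Qed.

Lemma phi_same w f k T : (forall j, In j T -> f j = k) -> phi w f T = upairs w T.
Proof. induction T; simpl; intros H; auto. rewrite IHT by auto. f_equal.
 apply rsum_ext_in; intros j Hj. rewrite (H j), (H a), Nat.eqb_refl; auto. Qed.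

Definition row (w : nat -> nat -> R) S i := rsum S (fun j => if Nat.eqb j i then 0 else w i j).

Lemma rows_sum w S : NoDup S -> (forall i j, w i j = w j i) -> rsum S (row w S) = 2 * upairs w S.
Proof. intros HS Hw. induction S as [|x S' IH]; simpl; [unfold row; simpl; lra|].
 inversion HS; subst. unfold row at 1; simpl. rewrite Nat.eqb_refl.
 rewrite (rsum_ext_in S' (fun j => if Nat.eqb j x then 0 else w x j) (w x))
   by (intros j Hj; destruct (Nat.eqb_spec j x); subst; tauto).
 rewrite (rsum_ext_in S' (row w (x :: S')) (fun i => w x i + row w S' i)).
 - rewrite rsum_plus, IH by auto. lra.
 - intros i Hi. unfold row; simpl. destruct (Nat.eqb_spec x i); [subst; tauto|]. rewrite Hw; auto. Qed.

Lemma row_filter_le w S p i : (forall i j, 0 <= w i j) -> row w (filter p S) i <= row w S i.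
Proof. intros Hw. unfold row. rewrite rsum_filter. apply rsum_le. intros j _.
 destruct (p j), (Nat.eqb j i); try lra; auto. Qed.

Definition sel w S th := fun i => if Rlt_dec (row w S i) th then true else false.

Lemma delete_count w S th : 0 < th -> (forall i j, 0 <= w i j) ->
  INR (length S) - rsum S (row w S) / th <= INR (length (filter (sel w S th) S)).
Proof. intros Hth Hw. rewrite length_filter_R.
 assert (INR (length S) = rsum S (fun _ => 1)) by (rewrite rsum_const; lra).
 rewrite H. unfold Rdiv. rewrite Rmult_comm, <- rsum_scal, <- rsum_minus.
 apply rsum_le. intros i _. unfold sel. destruct (Rlt_dec (row w S i) th).
 - assert (0 <= row w S i). { unfold row; apply rsum_nonneg; intros; destruct (Nat.eqb _ _); auto; lra. }
   assert (0 <= / th * row w S i) by (apply Rmult_le_pos; auto; left; apply Rinv_0_lt_compat; auto). lra.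
 - assert (1 <= / th * row w S i).
   { apply Rmult_le_reg_l with th; auto. rewrite <- Rmult_assoc, Rinv_r by lra. lra. } lra. Qed.
Lemma exists_max l (f : nat -> R) : l <> [] -> exists i, In i l /\ forall j, In j l -> f j <= f i.
Proof. induction l as [|a l IH]; [tauto|]. intros _. destruct l as [|b l'].
 - exists a. split; simpl; auto. intros j [<-|[]]; lra.
 - destruct IH as [i [Hi Hm]]; [congruence|]. destruct (Rle_dec (f a) (f i)).
   + exists i. split; [simpl; auto|]. intros j [<-|Hj]; auto.
   + exists a. split; [simpl; auto|]. intros j [<-|Hj]; [lra|]. specialize (Hm j Hj); lra. Qed.



Lemma comb_dot D v S a i : (forall k, (k < D)%nat -> rsum S (fun j => a j * v j k) = 0) ->
  rsum S (fun j => a j * dot D (v i) (v j)) = 0.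
Proof. intros H. unfold dot.
 rewrite (rsum_ext S _ (fun j => rsum (seq 0 D) (fun k => v i k * (a j * v j k)))).
 - rewrite rsum_swap. apply rsum_zero. intros k Hk. apply in_seq in Hk.
   rewrite rsum_scal, H by lia. lra.
 - intros j. rewrite <- rsum_scal. apply rsum_ext; intros; lra. Qed.

Lemma indep_dd D v S : NoDup S ->
  (forall i, In i S -> row (fun i j => Rabs (dot D (v i) (v j))) S i < dot D (v i) (v i)) ->
  lin_indep D v S.
Proof. intros HS Hr. split; auto. intros a Ha.
 destruct S as [|s0 S0]; [intros _ []|].
 destruct (exists_max (s0 :: S0) (fun j => Rabs (a j))) as [i [Hi Hm]]; [congruence|].
 set (S := s0 :: S0) in *.
 assert (Ai: a i = 0).
 { pose proof (comb_dot D v S a i Ha) as E.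
   rewrite (rsum_split_at S i) in E by auto.
   set (R0 := rsum S _) in E.
   assert (HR: Rabs R0 <= Rabs (a i) * row (fun i j => Rabs (dot D (v i) (v j))) S i).
   { eapply Rle_trans. apply rsum_abs. unfold row. rewrite <- rsum_scal. apply rsum_le.
     intros j Hj. destruct (Nat.eqb j i). rewrite Rabs_R0; lra.
     rewrite Rabs_mult. apply Rmult_le_compat_r. apply Rabs_pos. auto. }
   pose proof (Hr i Hi). destruct (Req_dec (a i) 0) as [|Hne]; auto. exfalso.
   assert (Rabs (a i * dot D (v i) (v i)) = Rabs R0) by (rewrite <- Rabs_Ropp; f_equal; lra).
   rewrite Rabs_mult in H0.
   assert (0 <= row (fun i j => Rabs (dot D (v i) (v j))) S i).
   { unfold row; apply rsum_nonneg; intros; destruct (Nat.eqb _ _); [lra|apply Rabs_pos]. }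
   rewrite (Rabs_right (dot D (v i) (v i))) in H0 by lra.
   pose proof (Rabs_pos_lt _ Hne).
   assert (Rabs (a i) * row (fun i j => Rabs (dot D (v i) (v j))) S i < Rabs (a i) * dot D (v i) (v i))
     by (apply Rmult_lt_compat_l; auto). lra. }
 intros j Hj. specialize (Hm j Hj). rewrite Ai, Rabs_R0 in Hm.
 pose proof (Rabs_pos (a j)). assert (Rabs (a j) = 0) by lra.
 destruct (Req_dec (a j) 0); auto. exfalso; apply (Rabs_no_R0 _ H1); auto. Qed.
Lemma dot_comm D x y : dot D x y = dot D y x.
Proof. unfold dot; apply rsum_ext; intros; lra. Qed.

Lemma dot_amgm D x y : dot D x y <= (dot D x x + dot D y y) / 2.
Proof. unfold dot. unfold Rdiv. rewrite <- rsum_plus, Rmult_comm, <- rsum_scal.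
 apply rsum_le; intros. pose proof (pow2_ge_0 (x x0 - y x0)). nra. Qed.

Lemma dot_self_nonneg D x : 0 <= dot D x x.
Proof. unfold dot; apply rsum_nonneg; intros; nra. Qed.

Lemma double_sum_nonneg D v T :
  0 <= rsum T (fun i => rsum T (fun j => dot D (v i) (v j))).
Proof. unfold dot.
 rewrite (rsum_ext T _ (fun i => rsum (seq 0 D) (fun k => v i k * rsum T (fun j => v j k)))).
 - rewrite rsum_swap. apply rsum_nonneg. intros k _.
   rewrite (rsum_ext T _ (fun i => rsum T (fun j => v j k) * v i k)) by (intros; lra).
   rewrite rsum_scal. nra.
 - intros i. rewrite rsum_swap. apply rsum_ext; intros k. apply rsum_scal. Qed.

Lemma row_ep_le D m v (p : nat -> bool) i :
  row (fun i j => edge_prob D (v i) (v j)) (filter p (seq 0 m)) i <= expected_degree D m v i.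
Proof. unfold row, expected_degree. rewrite !rsum_filter. apply rsum_le. intros j _.
 assert (0 <= edge_prob D (v i) (v j)) by (unfold edge_prob; apply Rmax_l).
 destruct (p j), (Nat.eqb j i); simpl; lra. Qed.

Lemma pos_le_ep D x y K : dot D x y < K -> 0 <= K ->
  Rmax 0 (dot D x y) <= (1 + K) * edge_prob D x y.
Proof. intros H HK. unfold edge_prob. unfold Rmax at 1. destruct (Rle_dec 0 (dot D x y)).
 - unfold Rmin. destruct (Rle_dec (dot D x y) 1).
   + rewrite Rmax_right by lra. nra.
   + rewrite Rmax_right by lra. lra.
 - apply Rmult_le_pos; [lra|apply Rmax_l]. Qed.

Lemma total_weight D m v (p : nat -> bool) c K :
  let T := filter p (seq 0 m) in
  0 <= K ->
  (forall i, In i T -> dot D (v i) (v i) < K) ->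
  (forall i, In i T -> expected_degree D m v i <= c) ->
  rsum T (row (fun i j => Rabs (dot D (v i) (v j))) T) <= INR (length T) * (2 * (1 + K) * c + K).
Proof. intros T HK Hd Hc.
 assert (HN: NoDup T) by (apply NoDup_filter, seq_NoDup).
 assert (E: forall i, row (fun i j => Rabs (dot D (v i) (v j))) T i =
   2 * row (fun i j => Rmax 0 (dot D (v i) (v j))) T i - row (fun i j => dot D (v i) (v j)) T i).
 { intros i. unfold row. rewrite <- rsum_scal, <- rsum_minus. apply rsum_ext; intros j.
   destruct (Nat.eqb j i); [lra|]. unfold Rmax, Rabs. destruct (Rle_dec 0 _), (Rcase_abs _); lra. }
 rewrite (rsum_ext T _ _ E), rsum_minus, rsum_scal.
 assert (H1: rsum T (row (fun i j => Rmax 0 (dot D (v i) (v j))) T) <= INR (length T) * ((1 + K) * c)).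
 { rewrite <- rsum_const. apply rsum_le. intros i Hi.
   apply Rle_trans with ((1 + K) * row (fun i j => edge_prob D (v i) (v j)) T i).
   - unfold row. rewrite <- rsum_scal. apply rsum_le. intros j Hj. destruct (Nat.eqb j i); [lra|].
     apply pos_le_ep; auto. pose proof (dot_amgm D (v i) (v j)). pose proof (Hd i Hi). pose proof (Hd j Hj). lra.
   - apply Rmult_le_compat_l; [lra|]. eapply Rle_trans; [apply row_ep_le|]. auto. }
 assert (H2: - (INR (length T) * K) <= rsum T (row (fun i j => dot D (v i) (v j)) T)).
 { rewrite (rsum_ext_in T _ (fun i => rsum T (fun j => dot D (v i) (v j)) - dot D (v i) (v i))).
   - rewrite rsum_minus. pose proof (double_sum_nonneg D v T).
     assert (rsum T (fun i => dot D (v i) (v i)) <= INR (length T) * K).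
     { rewrite <- rsum_const. apply rsum_le. intros; apply Rlt_le; auto. } lra.
   - intros i Hi. unfold row. rewrite (rsum_split_at T i (fun j => dot D (v i) (v j))) by auto. lra. }
 lra. Qed.
Lemma lg_ge1 n : (2 <= n)%nat -> 1 <= lg (INR n).
Proof. intros H. unfold lg. assert (Hl2: 0 < ln 2) by (rewrite <- ln_1; apply ln_increasing; lra).
 assert (2 <= INR n) by (replace 2 with (INR 2) by (simpl; lra); apply le_INR; auto).
 assert (ln 2 <= ln (INR n)) by (destruct (Req_dec 2 (INR n)) as [<-|]; [lra|left; apply ln_increasing; lra]).
 apply Rmult_le_reg_r with (ln 2); auto. unfold Rdiv. rewrite Rmult_assoc, Rinv_l by lra. lra. Qed.

Lemma final_arith alpha c Delta N G t q len :
  alpha = / 21240 -> 1 <= c -> 0 < Delta -> Delta <= c ^ 2 -> 0 <= N -> 1 <= G ->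
  (Delta / (60 * c ^ 2)) * (N / G) <= t -> 0 < q -> q <= 177 * c ^ 3 / Delta ->
  t / 2 <= q * len ->
  alpha * (Delta ^ 4 / c ^ 9) * N / G ^ 2 <= len.
Proof. intros Ha Hc HD HDc HN HG Ht Hq Hq2 Hl.
 assert (Hc3: 0 < c ^ 3) by (apply pow_lt; lra).
 assert (s1: t / (2 * q) <= len).
 { apply Rmult_le_reg_l with (2 * q); [lra|]. field_simplify; lra. }
 assert (Ht0: 0 <= t). { eapply Rle_trans; [|exact Ht]. apply Rmult_le_pos.
   apply Rmult_le_pos; [lra|]. apply Rlt_le, Rinv_0_lt_compat. nra. apply Rmult_le_pos; [lra|]. apply Rlt_le, Rinv_0_lt_compat; lra. }
 assert (s2: t * Delta / (354 * c ^ 3) <= t / (2 * q)).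
 { assert (q * Delta <= 177 * c ^ 3).
   { apply Rmult_le_reg_r with (/ Delta). apply Rinv_0_lt_compat; lra.
     rewrite Rmult_assoc, Rinv_r by lra. lra. }
   assert (0 <= t * (177 * c ^ 3 - q * Delta) / (354 * q * c ^ 3)).
   { unfold Rdiv. apply Rmult_le_pos. apply Rmult_le_pos; lra. apply Rlt_le, Rinv_0_lt_compat. nra. }
   replace (t * (177 * c ^ 3 - q * Delta) / (354 * q * c ^ 3)) with (t / (2 * q) - t * Delta / (354 * c ^ 3)) in H0 by (field; lra).
   lra. }
 assert (s3: (Delta / (60 * c ^ 2)) * (N / G) * Delta / (354 * c ^ 3) <= t * Delta / (354 * c ^ 3)).
 { unfold Rdiv. apply Rmult_le_compat_r. apply Rlt_le, Rinv_0_lt_compat; lra.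
   apply Rmult_le_compat_r; lra. }
 assert (s4: alpha * (Delta ^ 4 / c ^ 9) * N / G ^ 2 <= (Delta / (60 * c ^ 2)) * (N / G) * Delta / (354 * c ^ 3)).
 { subst alpha.
   assert (Hc2: 0 < c ^ 2) by nra.
   assert (Hc5: 0 < c ^ 5) by (apply pow_lt; lra).
   replace (/ 21240 * (Delta ^ 4 / c ^ 9) * N / G ^ 2) with
     ((Delta ^ 2 * N / (21240 * c ^ 5 * G)) * ((Delta ^ 2 / c ^ 4) * / G)).
   2:{ field. repeat split; lra. }
   replace (Delta / (60 * c ^ 2) * (N / G) * Delta / (354 * c ^ 3)) with
     ((Delta ^ 2 * N / (21240 * c ^ 5 * G)) * 1) by (field; repeat split; lra).
   apply Rmult_le_compat_l.
   - apply Rmult_le_pos. nra. apply Rlt_le, Rinv_0_lt_compat. nra.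
   - assert (Delta ^ 2 <= c ^ 4). { replace (c ^ 4) with ((c ^ 2) ^ 2) by ring. apply pow_incr; lra. }
     assert (Delta ^ 2 / c ^ 4 <= 1). { apply Rmult_le_reg_r with (c ^ 4). nra.
       unfold Rdiv; rewrite Rmult_assoc, Rinv_l by nra. lra. }
     assert (/ G <= 1) by (rewrite <- Rinv_1; apply Rinv_le_contravar; lra).
     assert (0 <= / G) by (apply Rlt_le, Rinv_0_lt_compat; lra).
     assert (0 <= Delta ^ 2 / c ^ 4) by (unfold Rdiv; apply Rmult_le_pos; [nra|apply Rlt_le, Rinv_0_lt_compat; nra]).
     nra. }
 lra. Qed.
Theorem mainTheorem9 :
  exists alpha : R, 0 < alpha /\
  forall (n : nat) (c Delta : R) (D m : nat) (v : nat -> nat -> R) (L : R),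
    (2 <= n)%nat -> 1 <= c -> 0 < Delta -> Delta <= c ^ 2 ->
    (m <= n)%nat ->
    (forall i, (i < m)%nat -> expected_degree D m v i <= c) ->
    0 < L -> sqrt Delta / (4 * c) <= L ->
    (forall i, (i < m)%nat -> norm2 D (v i) < 2 * L) ->
    (Delta / (60 * c ^ 2)) * (INR n / lg (INR n)) <= INR (count_long D m v L) ->
    rank_ge D m v (alpha * (Delta ^ 4 / c ^ 9) * INR n / (lg (INR n)) ^ 2).
Proof.
 exists (/ 21240). split; [apply Rinv_0_lt_compat; lra|].
 intros n c Delta D m v L Hn Hc HD HDc Hmn Hdeg HL HLD Hnorm Hcount.
 set (p := fun i => if Rle_dec L (norm2 D (v i)) then true else false).
 set (T := filter p (seq 0 m)).
 assert (HtT: count_long D m v L = length T) by reflexivity.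
 set (w := fun i j => Rabs (dot D (v i) (v j))).
 assert (Hw0: forall i j, 0 <= w i j) by (intros; apply Rabs_pos).
 assert (Hws: forall i j, w i j = w j i) by (intros; unfold w; rewrite dot_comm; auto).
 assert (HNT: NoDup T) by (apply NoDup_filter, seq_NoDup).
 assert (HinT: forall i, In i T -> (i < m)%nat /\ p i = true).
 { intros i Hi. apply filter_In in Hi. destruct Hi as [Hi Hp]. apply in_seq in Hi. split; [lia|auto]. }
 assert (HL2: 0 < L ^ 2) by (apply pow_lt; auto).
 assert (Hup: forall i, (i < m)%nat -> dot D (v i) (v i) < 4 * L ^ 2).
 { intros i Hi. specialize (Hnorm i Hi). unfold norm2 in Hnorm.
   pose proof (dot_self_nonneg D (v i)). pose proof (sqrt_pos (dot D (v i) (v i))).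
   rewrite <- (sqrt_sqrt (dot D (v i) (v i))) by auto. nra. }
 assert (Hlow: forall i, In i T -> L ^ 2 <= dot D (v i) (v i)).
 { intros i Hi. destruct (HinT i Hi) as [_ Hp]. unfold p in Hp.
   destruct (Rle_dec L (norm2 D (v i))) as [Hle|]; [|discriminate]. unfold norm2 in Hle.
   pose proof (dot_self_nonneg D (v i)). pose proof (sqrt_pos (dot D (v i) (v i))).
   rewrite <- (sqrt_sqrt (dot D (v i) (v i))) by auto. nra. }
 assert (HW: rsum T (row w T) <= INR (length T) * (2 * (1 + 4 * L ^ 2) * c + 4 * L ^ 2)).
 { apply total_weight. lra. intros i Hi; apply Hup, HinT; auto. intros i Hi; apply Hdeg, HinT; auto. }
 rewrite rows_sum in HW by auto.
 set (x := 8 * c / L ^ 2 + 48 * c).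
 assert (Hx: 0 < x). { unfold x. assert (0 <= 8 * c / L ^ 2) by (unfold Rdiv; apply Rmult_le_pos; [lra|apply Rlt_le, Rinv_0_lt_compat; lra]). lra. }
 destruct (archimed x) as [Hu1 Hu2].
 assert (Hz: (0 <= up x)%Z). { apply le_IZR. simpl. lra. }
 set (q := Z.to_nat (up x)).
 assert (Hq: INR q = IZR (up x)) by (unfold q; rewrite INR_IZR_INZ, Z2Nat.id; auto).
 assert (Hq1: (1 <= q)%nat). { assert (0 < INR q) by (rewrite Hq; lra). destruct q; [simpl in H; lra|lia]. }
 destruct (coloring w q T HNT Hq1) as [f [Hf Hphi]].
 set (beta := 4 / L ^ 2).
 set (h := fun k => INR (length (cls f k T)) - beta * phi w f (cls f k T)).
 assert (Hsum: rsum (seq 0 q) h = INR (length T) - beta * phi w f T).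
 { unfold h. rewrite rsum_minus, rsum_scal, len_classes, phi_classes; auto. }
 destruct (avg_ge q h Hq1) as [k [Hk Hh]].
 set (S := cls f k T).
 assert (HNS: NoDup S) by (apply NoDup_filter; auto).
 assert (HSph: phi w f S = upairs w S).
 { apply (phi_same w f k). intros j Hj. unfold S, cls in Hj. apply filter_In in Hj.
   destruct Hj as [_ Hj]. apply Nat.eqb_eq; auto. }
 set (th := L ^ 2 / 2).
 set (S' := filter (sel w S th) S).
 assert (Hdel: INR (length S) - rsum S (row w S) / th <= INR (length S')).
 { apply delete_count; auto. unfold th; lra. }
 rewrite rows_sum in Hdel by auto.
 assert (Hlen: h k <= INR (length S')).
 { unfold h. fold S. rewrite HSph. replace (beta * upairs w S) with (2 * upairs w S / th). lra.
   unfold beta, th. field. lra. }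
 exists S'. split; [|split].
 - intros i Hi. unfold S' in Hi. apply filter_In in Hi. destruct Hi as [Hi _].
   unfold S, cls in Hi. apply filter_In in Hi. destruct Hi as [Hi _].
   unfold T in Hi. apply filter_In in Hi. tauto.
 - apply indep_dd. apply NoDup_filter; auto.
   intros i Hi. pose proof Hi as Hi'. unfold S' in Hi'. apply filter_In in Hi'. destruct Hi' as [HiS Hsel].
   assert (HiT: In i T). { unfold S, cls in HiS. apply filter_In in HiS. tauto. }
   pose proof (Hlow i HiT). fold w.
   eapply Rle_lt_trans. apply row_filter_le; auto.
   unfold sel in Hsel. destruct (Rlt_dec (row w S i) th); [|discriminate]. unfold th in *. lra.
 -
   set (t := INR (length T)) in *.
   assert (Ht0: 0 <= t) by apply pos_INR.
   assert (HqR: x < INR q /\ INR q <= x + 1) by (rewrite Hq; lra).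
   assert (Hbeta: 0 < beta) by (unfold beta; unfold Rdiv; apply Rmult_lt_0_compat; [lra|apply Rinv_0_lt_compat; lra]).
   assert (Hphi2: INR q * (beta * phi w f T) <= beta * (t * ((1 + 4 * L ^ 2) * c + 2 * L ^ 2))).
   { rewrite <- Rmult_assoc, (Rmult_comm (INR q)), Rmult_assoc. apply Rmult_le_compat_l; [lra|].
     assert (t * (2 * (1 + 4 * L ^ 2) * c + 4 * L ^ 2) = 2 * (t * ((1 + 4 * L ^ 2) * c + 2 * L ^ 2))) by ring. lra. }
   assert (Hbx: beta * ((1 + 4 * L ^ 2) * c + 2 * L ^ 2) <= x / 2).
   { unfold beta, x. replace (4 / L ^ 2 * ((1 + 4 * L ^ 2) * c + 2 * L ^ 2)) with (4 * c / L ^ 2 + 16 * c + 8) by (field; lra).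
     replace ((8 * c / L ^ 2 + 48 * c) / 2) with (4 * c / L ^ 2 + 24 * c) by (field; lra). lra. }
   assert (Hmain: t / 2 <= INR q * INR (length S')).
   { assert (INR q * h k <= INR q * INR (length S')) by (apply Rmult_le_compat_l; [apply pos_INR|auto]).
     assert (beta * (t * ((1 + 4 * L ^ 2) * c + 2 * L ^ 2)) <= t * (x / 2)) by nra.
     assert (t * (x / 2) <= t * (INR q / 2)) by nra.
     assert (beta * phi w f T <= t / 2).
     { apply Rmult_le_reg_l with (INR q). lra. lra. }
     lra. }
   assert (HL2b: Delta / (16 * c ^ 2) <= L ^ 2).
   { assert (0 <= sqrt Delta / (4 * c)) by (unfold Rdiv; apply Rmult_le_pos; [apply sqrt_pos|apply Rlt_le, Rinv_0_lt_compat; lra]).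
     assert ((sqrt Delta / (4 * c)) ^ 2 <= L ^ 2) by (apply pow_incr; lra).
     replace ((sqrt Delta / (4 * c)) ^ 2) with (sqrt Delta * sqrt Delta / (16 * c ^ 2)) in H0 by (field; lra).
     rewrite sqrt_sqrt in H0 by lra. auto. }
   assert (Hq177: INR q <= 177 * c ^ 3 / Delta).
   { assert (8 * c / L ^ 2 <= 128 * c ^ 3 / Delta).
     { apply Rle_trans with (8 * c / (Delta / (16 * c ^ 2))).
       - unfold Rdiv. apply Rmult_le_compat_l; [lra|]. apply Rinv_le_contravar; auto.
         apply Rmult_lt_0_compat; [lra|apply Rinv_0_lt_compat; nra].
       - right. field. lra. }
     assert (49 * c <= 49 * c ^ 3 / Delta).
     { replace (49 * c ^ 3 / Delta) with (49 * c * (c ^ 2 / Delta)) by (field; lra).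
       assert (1 <= c ^ 2 / Delta). { apply Rmult_le_reg_r with Delta; auto. unfold Rdiv; rewrite Rmult_assoc, Rinv_l by lra. lra. }
       nra. }
     assert (177 * c ^ 3 / Delta = 128 * c ^ 3 / Delta + 49 * c ^ 3 / Delta) by (field; lra).
     unfold x in HqR. lra. }
   apply (final_arith _ c Delta (INR n) (lg (INR n)) t (INR q)); auto.
   all: try apply pos_INR. all: try (apply lg_ge1; auto). all: lra.
Qed.
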